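(* Let $\mathbf{A}_1$ be an algebra over a signature $\Theta$ with universe $\{0,1/2,1\}$, and let $L_1=\langle\mathbf{A}_1,F_1\rangle$ with $0\notin F_1$ and $1\in F_1$. Let $\mathbf{A}_2$ be a subalgebra of $\mathbf{A}_1$ with universe $\{0,1\}$, and let $L_2=\langle\mathbf{A}_2,\{1\}\rangle$ (a presentation of classical propositional logic over $\Theta$), with $L_2$ distinct from $L_1$. Suppose there are formulas $\top(p)$ and $\bot(p)$ in one variable $p$ with $e(\top(p))=1$ and $e(\bot(p))=0$ for every evaluation $e$ into $\mathbf{A}_1$. Then $L_1$ is maximal with respect to $L_2$.
   Context: A logical matrix is a pair $\langle\mathbf{A},F\rangle$ with $\mathbf{A}$ an algebra over $\Theta$ and $\emptyset\neq F\subseteq A$; the matrix logic has consequence relation $\Gamma\vdash\varphi$ iff every homomorphism $e$ from the formula algebra into $\mathbf{A}$ with $e[\Gamma]\subseteq F$ satisfies $e(\varphi)\in F$. $L_1$ is maximal with respect to $L_2$ if ${\vdash_{L_1}}\subsetneq{\vdash_{L_2}}$ and for every formula $\varphi$ with $\vdash_{L_2}\varphi$ but $\nvdash_{L_1}\varphi$, the logic obtained from $L_1$ by adding all substitution instances of $\varphi$ as extra premises (i.e. $\Gamma\vdash\psi$ iff $\Gamma\cup\{\sigma(\varphi):\sigma\text{ substitution}\}\vdash_{L_1}\psi$) coincides with $L_2$. *)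

(* Defs.v *)
From mathcomp Require Import all_boot.
Set Implicit Arguments. Unset Strict Implicit. Unset Printing Implicit Defensive.

Record signature := Signature { op : Type ; ar : op -> nat }.

Inductive formula (S : signature) : Type :=
| Var : nat -> formula S
| App : forall f : op S, ('I_(ar f) -> formula S) -> formula S.
Arguments Var {S} _.
Arguments App {S} f _.

Fixpoint occurs (S : signature) (n : nat) (phi : formula S) : Prop :=
  match phi with
  | Var m => n = m
  | App f args => exists i, occurs n (args i)
  end.

Fixpoint subst (S : signature) (sigma : nat -> formula S) (phi : formula S) : formula S :=
  match phi with
  | Var m => sigma m
  | App f args => App f (fun i => subst sigma (args i))
  end.

Definition algebra (S : signature) (A : Type) := forall f : op S, ('I_(ar f) -> A) -> A.

Fixpoint eval (S : signature) (A : Type) (alg : algebra S A) (v : nat -> A) (phi : formula S) : A :=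
  match phi with
  | Var m => v m
  | App f args => alg f (fun i => eval alg v (args i))
  end.

Definition matrix_cons (S : signature) (A : Type) (alg : algebra S A) (F : A -> Prop)
  (Gamma : formula S -> Prop) (phi : formula S) : Prop :=
  forall v : nat -> A, (forall psi, Gamma psi -> F (eval alg v psi)) -> F (eval alg v phi).

Definition crel (S : signature) := (formula S -> Prop) -> formula S -> Prop.

(* L1 extended by all substitution instances of phi as extra premises. *)
Definition axiom_ext (S : signature) (L1 : crel S) (phi : formula S) : crel S :=
  fun Gamma psi => L1 (fun chi => Gamma chi \/ exists sigma, chi = subst sigma phi) psi.

Definition empty_set (S : signature) : formula S -> Prop := fun _ => False.

Definition maximal_wrt (S : signature) (L1 L2 : crel S) : Prop :=
  (forall Gamma psi, L1 Gamma psi -> L2 Gamma psi) /\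
  (exists Gamma psi, L2 Gamma psi /\ ~ L1 Gamma psi) /\
  (forall phi, L2 (@empty_set S) phi -> ~ L1 (@empty_set S) phi ->
     forall Gamma psi, axiom_ext L1 phi Gamma psi <-> L2 Gamma psi).

Inductive three := Zero | Half | One.

Definition emb (b : bool) : three := if b then One else Zero.

(* Main.v *)
Require Import Defs.
From mathcomp Require Import all_boot.
From Stdlib Require Import Classical FunctionalExtensionality.

Lemma eval_subst (S : signature) (A : Type) (alg : algebra S A) (v : nat -> A)
  (sigma : nat -> formula S) (phi : formula S) :
  eval alg v (subst sigma phi) = eval alg (fun m => eval alg v (sigma m)) phi.
Proof.
  induction phi as [m|f args IH]; simpl; [reflexivity|].
  f_equal; apply functional_extensionality; intro i; apply IH.
Qed.

Lemma eval_emb (S : signature) (A1 : algebra S three) (A2 : algebra S bool)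
  (Hsub : forall (f : op S) (args : 'I_(ar f) -> bool),
            A1 f (fun i => emb (args i)) = emb (A2 f args))
  (b : nat -> bool) (phi : formula S) :
  eval A1 (fun m => emb (b m)) phi = emb (eval A2 b phi).
Proof.
  induction phi as [m|f args IH]; simpl; [reflexivity|].
  rewrite -Hsub. f_equal; apply functional_extensionality; intro i; apply IH.
Qed.

Theorem corollary2p3 (S : signature) (A1 : algebra S three) (F1 : three -> Prop)
  (A2 : algebra S bool)
  (HF0 : ~ F1 Zero) (HF1 : F1 One)
  (Hsub : forall (f : op S) (args : 'I_(ar f) -> bool),
            A1 f (fun i => emb (args i)) = emb (A2 f args))
  (Hdist : exists (Gamma : formula S -> Prop) (phi : formula S),
             ~ (matrix_cons A1 F1 Gamma phi <-> matrix_cons A2 (fun b => b = true) Gamma phi))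
  (top bot : formula S)
  (Htopv : forall n, occurs n top -> n = 0%N)
  (Hbotv : forall n, occurs n bot -> n = 0%N)
  (Htop : forall v : nat -> three, eval A1 v top = One)
  (Hbot : forall v : nat -> three, eval A1 v bot = Zero) :
  maximal_wrt (matrix_cons A1 F1) (matrix_cons A2 (fun b => b = true)).
Proof.
  assert (P1 : forall Gamma psi, matrix_cons A1 F1 Gamma psi ->
                 matrix_cons A2 (fun b => b = true) Gamma psi).
  { intros Gamma psi H b Hb.
    specialize (H (fun m => emb (b m))).
    rewrite (@eval_emb _ _ _ Hsub) in H.
    destruct (eval A2 b psi); [reflexivity|].
    exfalso; apply HF0; apply H.
    intros chi Hc; rewrite (@eval_emb _ _ _ Hsub) Hb; auto. }
  split; [exact P1|split].
  { destruct Hdist as [G [p Hn]]. exists G, p. split.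
    - apply NNPP; intro Hc; apply Hn; split; [apply P1|]; intro; contradiction.
    - intro H; apply Hn; split; [intro; apply P1; auto|intro; auto]. }
  intros phi H2 H1 Gamma psi; split.
  - intro H. apply P1 in H. intros b Hb. apply H.
    intros chi [Hc|[sigma ->]]; [auto|].
    rewrite eval_subst. apply H2. intros _ [].
  - intros H v Hv.
    assert (Hw : exists w, ~ F1 (eval A1 w phi)).
    { apply NNPP; intro Hn; apply H1; intros w _.
      apply NNPP; intro Hc; apply Hn; exists w; exact Hc. }
    destruct Hw as [w Hw].
    assert (NH : forall x, v x <> Half).
    { intros x Hx.
      set sigma := fun m => match w m with One => top | Zero => bot | Half => Var x end.
      assert (Hi := Hv (subst sigma phi) (or_intror (ex_intro _ sigma erefl))).
      rewrite eval_subst in Hi. apply Hw.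
      replace w with (fun m => eval A1 v (sigma m)); [exact Hi|].
      apply functional_extensionality; intro m; unfold sigma.
      destruct (w m); simpl; auto. }
    set b := fun m => match v m with One => true | _ => false end.
    assert (Hvb : v = fun m => emb (b m)).
    { apply functional_extensionality; intro m; unfold b.
      specialize (NH m); destruct (v m); simpl; congruence. }
    rewrite Hvb (@eval_emb _ _ _ Hsub).
    assert (E : eval A2 b psi = true).
    { apply H. intros chi Hc.
      specialize (Hv chi (or_introl Hc)). rewrite Hvb (@eval_emb _ _ _ Hsub) in Hv.
      destruct (eval A2 b chi); [reflexivity|contradiction]. }
    rewrite E; exact HF1.
Qed.
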